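(* Let $S\subseteq\mathbb{R}^n\times\mathbb{R}^m$ be convex, let (MOCP) be bounded and fix $p\in[1,\infty]$. If $\bar S\subseteq S$ is a Hausdorff-type finite $\epsilon$-solution of (MOCP), then $\bar S$ is a finite $(\|Q\|\epsilon)$-solution of (CP), where $\|Q\|=(m^{p-1}+1)^{1/p}$ (equal to $m$ for $p=\infty$).
   Context: $\|\cdot\|$ is the $p$-norm, $B_\epsilon$ its closed $\epsilon$-ball. (CP): compute $Y=\{y:\exists x,(x,y)\in S\}$; for bounded (CP) a nonempty finite $\bar S\subseteq S$ is a finite $\epsilon$-solution if $Y\subseteq\operatorname{conv}\operatorname{proj}_y[\bar S]+B_\epsilon$. $P(x,y)=(y,-\mathbf{1}^\top y)$, $Qy=(y,-\mathbf{1}^\top y)$, $\mathbf{1}\in\mathbb{R}^m$ all-ones; $\|Q\|$ is the operator norm induced by the $p$-norms. (MOCP): minimize $P(x,y)$ w.r.t. $\le_{\mathbb{R}^{m+1}_+}$ over $(x,y)\in S$, upper image $\mathcal{P}=\operatorname{cl}(P[S]+\mathbb{R}^{m+1}_+)$; bounded means $\mathcal{P}\subseteq\{q\}+\mathbb{R}^{m+1}_+$ for some $q$. Hausdorff distance $d_H(A_1,A_2)=\max\{\sup_{a_1\in A_1}\inf_{a_2\in A_2}\|a_1-a_2\|,\sup_{a_2\in A_2}\inf_{a_1\in A_1}\|a_1-a_2\|\}$. A nonempty finite $\bar S\subseteq S$ is a Hausdorff-type finite $\epsilon$-solution of (MOCP) if $d_H(\mathcal{P},\operatorname{conv}P[\bar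 S]+\mathbb{R}^{m+1}_+)\le\epsilon$. *)

(* Defs.v *)
From HB Require Import structures.
From mathcomp Require Import all_boot all_order all_algebra.
From mathcomp Require Import all_classical all_reals all_analysis.
Set Implicit Arguments. Unset Strict Implicit. Unset Printing Implicit Defensive.
Import Order.TTheory GRing.Theory Num.Theory.
Import numFieldNormedType.Exports.
Local Open Scope classical_set_scope.
Local Open Scope ring_scope.

Section Defs.
Variable R : realType.

Definition pnorm (p : \bar R) (k : nat) (x : 'rV[R]_k) : R :=
  if p == +oo%E then \big[Num.max/0]_(i < k) `|x 0 i|
  else (\sum_(i < k) `|x 0 i| `^ fine p) `^ (fine p)^-1.

Definition hausdorff (p : \bar R) (k : nat) (A1 A2 : set 'rV[R]_k) : \bar R :=
  Order.max
    (ereal_sup [set ereal_inf [set (pnorm p (a1 - a2))%:E | a2 in A2] | a1 in A1])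
    (ereal_sup [set ereal_inf [set (pnorm p (a1 - a2))%:E | a1 in A1] | a2 in A2]).

Definition conv (k : nat) (A : set 'rV[R]_k) : set 'rV[R]_k :=
  [set z | exists (N : nat) (w : 'I_N -> R) (a : 'I_N -> 'rV[R]_k),
     (forall i, 0 <= w i) /\ \sum_(i < N) w i = 1 /\ (forall i, A (a i)) /\
     z = \sum_(i < N) w i *: a i].

Definition msum (k : nat) (A B : set 'rV[R]_k) : set 'rV[R]_k :=
  [set a + b | a in A & b in B].

Definition orthant (k : nat) : set 'rV[R]_k := [set d | forall i, 0 <= d 0 i].

Definition pball (p : \bar R) (k : nat) (e : R) : set 'rV[R]_k :=
  [set z | pnorm p z <= e].

Definition convex_set2 (n m : nat) (S : set ('rV[R]_n * 'rV[R]_m)) : Prop :=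
  forall u v, S u -> S v -> forall t : R, 0 <= t <= 1 ->
    S (t *: u.1 + (1 - t) *: v.1, t *: u.2 + (1 - t) *: v.2).

Definition Qmap (m : nat) (y : 'rV[R]_m) : 'rV[R]_(m + 1) :=
  row_mx y (const_mx (- \sum_(j < m) y 0 j)).

Definition Pmap (n m : nat) (xy : 'rV[R]_n * 'rV[R]_m) : 'rV[R]_(m + 1) :=
  Qmap xy.2.

Definition upper_image (n m : nat) (S : set ('rV[R]_n * 'rV[R]_m))
  : set 'rV[R]_(m + 1) :=
  closure (msum (@Pmap n m @` S) (@orthant (m + 1))).

Definition mocp_bounded (n m : nat) (S : set ('rV[R]_n * 'rV[R]_m)) : Prop :=
  exists q : 'rV[R]_(m + 1), upper_image S `<=` msum [set q] (@orthant (m + 1)).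

Definition hausdorff_finite_sol (p : \bar R) (n m : nat)
  (S Sbar : set ('rV[R]_n * 'rV[R]_m)) (eps : R) : Prop :=
  [/\ Sbar !=set0, finite_set Sbar, Sbar `<=` S &
      (hausdorff p (upper_image S) (msum (conv (@Pmap n m @` Sbar)) (@orthant (m + 1)))
        <= eps%:E)%E].

Definition Yset (n m : nat) (S : set ('rV[R]_n * 'rV[R]_m)) : set 'rV[R]_m :=
  snd @` S.

Definition cp_finite_sol (p : \bar R) (n m : nat)
  (S Sbar : set ('rV[R]_n * 'rV[R]_m)) (eps : R) : Prop :=
  [/\ Sbar !=set0, finite_set Sbar, Sbar `<=` S &
      Yset S `<=` msum (conv (snd @` Sbar)) (pball p eps)].

Definition normQ (p : \bar R) (m : nat) : R :=
  if p == +oo%E then m%:R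
  else (m%:R `^ (fine p - 1) + 1) `^ (fine p)^-1.

End Defs.

(* Main.v *)
Require Import Defs.
From HB Require Import structures.
From mathcomp Require Import all_boot all_order all_algebra.
From mathcomp Require Import all_classical all_reals all_analysis.
From mathcomp Require Import lra.
Import Order.TTheory GRing.Theory Num.Theory.
Import numFieldNormedType.Exports.
Set Implicit Arguments. Unset Strict Implicit. Unset Printing Implicit Defensive.
Local Open Scope classical_set_scope.
Local Open Scope ring_scope.

Section S.
Variable R : realType.
Lemma conv2 (q t a b : R) : 1 <= q -> 0 <= t <= 1 -> 0 <= a -> 0 <= b ->
  (t * a + (1 - t) * b) `^ q <= t * a `^ q + (1 - t) * b `^ q.
Proof.
move=> q1 /andP[t0 t1] a0 b0.
have := @convex_powR R q q1 (Itv01 t0 t1) a b.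
rewrite !inE /= !in_itv /= !andbT => /(_ a0 b0).
by rewrite !convRE.
Qed.

Lemma super2 (q x y : R) : 1 <= q -> 0 <= x -> 0 <= y ->
  x `^ q + y `^ q <= (x + y) `^ q.
Proof.
move=> q1 x0 y0; have q0 : 0 < q by rewrite (lt_le_trans _ q1).
rewrite -[x `^ q](mulr_powRB1 x0 q0) -[y `^ q](mulr_powRB1 y0 q0).
rewrite -[(x + y) `^ q](mulr_powRB1 (addr_ge0 x0 y0) q0) mulrDl.
apply: lerD; apply: ler_wpM2l => //; apply: ge0_ler_powR;
  rewrite ?subr_ge0 ?nnegrE ?addr_ge0 ?lerDl ?lerDr //.
Qed.

Lemma superN (q : R) (I : finType) (P : pred I) (F : I -> R) : 1 <= q ->
  (forall i, P i -> 0 <= F i) ->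
  \sum_(i | P i) F i `^ q <= (\sum_(i | P i) F i) `^ q.
Proof.
move=> q1 F0; have q0 : 0 < q by rewrite (lt_le_trans _ q1).
pose K (a b : R) := 0 <= b /\ a <= b `^ q.
suff [] : K (\sum_(i | P i) F i `^ q) (\sum_(i | P i) F i) by [].
apply: big_rec2; first by split; rewrite ?powR_ge0.
move=> i y1 y2 Pi [y20 h]; split; first by rewrite addr_ge0 ?F0.
apply: (le_trans _ (super2 q1 (F0 _ Pi) y20)); by rewrite lerD2l.
Qed.

Lemma powmean (q : R) (r : seq R) : 1 <= q -> (forall x, x \in r -> 0 <= x) ->
  (\sum_(x <- r) x) `^ q <= (size r)%:R `^ (q - 1) * \sum_(x <- r) x `^ q.
Proof.
move=> q1; have q0 : 0 < q by rewrite (lt_le_trans _ q1).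
elim: r => [|x r IH] r0.
  by rewrite !big_nil powR0 ?gt_eqF // mulr0.
have x0 : 0 <= x by apply: r0; rewrite inE eqxx.
have {}r0 : forall z, z \in r -> 0 <= z by move=> z zr; apply: r0; rewrite inE zr orbT.
have {}IH := IH r0.
rewrite !big_cons /=.
set S := \sum_(z <- r) z; set T := \sum_(z <- r) z `^ q.
have S0 : 0 <= S by rewrite /S big_seq sumr_ge0.
have T0 : 0 <= T by rewrite /T sumr_ge0 // => *; rewrite powR_ge0.
case: r r0 IH @S @T S0 T0 => [|y r] r0 IH S T S0 T0.
  by rewrite /S /T /= !big_nil !addr0 powR1 mul1r.
set k := (size (y :: r))%:R : R.
have k0 : 0 < k by rewrite /k ltr0n.
have k10 : 0 < k + 1 by rewrite addr_gt0.
pose t := (k + 1)^-1.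
have t01 : 0 <= t <= 1 by rewrite /t invr_ge0 ltW //= invf_le1 // lerDr.
have E : x + S = (k + 1) * (t * x + (1 - t) * (S / k)).
  rewrite /t mulrDr mulrA mulfV ?gt_eqF // mul1r; congr (_ + _).
  rewrite mulrA mulrBr mulr1 mulfV ?gt_eqF // addrK mulrC mulfVK ?gt_eqF //.
have Sk0 : 0 <= S / k by rewrite divr_ge0 // ltW.
have Y0 : 0 <= t * x + (1 - t) * (S / k).
  by have /andP[t0 t1] := t01; rewrite addr_ge0 // mulr_ge0 // subr_ge0.
rewrite E (powRM _ (ltW k10) Y0).
apply: (le_trans (ler_wpM2l (powR_ge0 _ _) (conv2 q1 t01 x0 Sk0))).
have -> : (size [:: x, y & r])%:R = k + 1 by rewrite /k /= -addn1 natrD.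
rewrite -(mulr_powRB1 (ltW k10) q0) [X in X * _ <= _]mulrC -mulrA.
apply: ler_wpM2l; first exact: powR_ge0.
rewrite mulrDr !mulrA /t mulfV ?gt_eqF // mul1r mulrBr mulr1 mulfV ?gt_eqF // addrK.
rewrite lerD2l.
(* k * (S/k)^q <= T *)
have kq0 : 0 < k `^ (q - 1) by rewrite powR_gt0.
rewrite -(ler_pM2l kq0) mulrA [k `^ _ * k]mulrC (mulr_powRB1 (ltW k0) q0).
by rewrite -(powRM _ (ltW k0) Sk0) [k * _]mulrC divfK ?gt_eqF.
Qed.

Lemma QmapEl m (w : 'rV[R]_m) (i : 'I_m) : Qmap w 0 (lshift 1 i) = w 0 i.
Proof. by rewrite /Qmap row_mxEl. Qed.

Lemma QmapEr m (w : 'rV[R]_m) (j : 'I_1) :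
  Qmap w 0 (rshift m j) = - \sum_(i < m) w 0 i.
Proof. by rewrite /Qmap row_mxEr mxE. Qed.

Lemma lerNn (x : R) : - x <= `|x|.
Proof. by rewrite -normrN ler_norm. Qed.

Lemma subE m (A B : 'rV[R]_m) j : (A - B) 0 j = A 0 j - B 0 j.
Proof. by rewrite !mxE. Qed.

Lemma core_b m (w : 'rV[R]_m) (d : 'rV[R]_(m + 1)) :
  (forall i, 0 <= d 0 i) ->
  forall i, - w 0 i <= `|(Qmap w - d) 0 (lshift 1 i)|.
Proof.
move=> d0 i; rewrite subE QmapEl; apply: le_trans (lerNn _).
by rewrite lerN2 gerBl.
Qed.

Lemma core_a m (w : 'rV[R]_m) (d : 'rV[R]_(m + 1)) :
  (forall i, 0 <= d 0 i) ->
  \sum_(i < m) w 0 i <= `|(Qmap w - d) 0 (rshift m ord0)|.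
Proof.
move=> d0; rewrite subE QmapEr; apply: le_trans (lerNn _).
by rewrite opprB opprK lerDr.
Qed.

Lemma core_fin (q : R) m (w : 'rV[R]_m) (d : 'rV[R]_(m + 1)) : 1 <= q ->
  (forall i, 0 <= d 0 i) ->
  \sum_(i < m) `|w 0 i| `^ q <=
  (m%:R `^ (q - 1) + 1) * \sum_(j < m + 1) `|(Qmap w - d) 0 j| `^ q.
Proof.
move=> q1 d0; have q0 : 0 < q by rewrite (lt_le_trans _ q1).
have hb := core_b w d0; have ha := core_a w d0.
set u := Qmap w - d in hb ha *.
rewrite big_split_ord big_ord1 /=.
pose b := fun i : 'I_m => `|u 0 (lshift 1 i)|.
pose a := `|u 0 (rshift m ord0)|.
pose B := \sum_(i < m) b i `^ q. pose A := a `^ q. pose M := m%:R `^ (q - 1).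
change (\sum_(i < m) `|w 0 i| `^ q <= (M + 1) * (B + A)).
have B0 : 0 <= B by rewrite /B sumr_ge0 // => *; rewrite powR_ge0.
have A0 : 0 <= A by rewrite powR_ge0.
have M0 : 0 <= M by rewrite powR_ge0.
pose Ng := [pred i : 'I_m | w 0 i < 0].
rewrite (bigID Ng) /=.
have h1 : \sum_(i < m | Ng i) `|w 0 i| `^ q <= \sum_(i < m | Ng i) b i `^ q.
  apply: ler_sum => i /= wi0.
  have wb : `|w 0 i| <= b i by rewrite ltr0_norm //; exact: hb.
  by apply: (ge0_ler_powR (ltW q0)) => //; rewrite /b nnegrE.
have h1' : \sum_(i < m | Ng i) b i `^ q <= B.
  rewrite /B [X in _ <= X](bigID Ng) /= lerDl sumr_ge0 // => *.
  by rewrite powR_ge0.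
have h2 : \sum_(i < m | ~~ Ng i) `|w 0 i| `^ q <=
          M * (A + \sum_(i < m | Ng i) b i `^ q).
  case: (boolP [exists i, ~~ Ng i]) => [/existsP [i0 Hi0] | /existsPn Hn]; last first.
    rewrite big1; last by move=> i Hi; have := Hn i; rewrite Hi.
    by rewrite mulr_ge0 // addr_ge0 // sumr_ge0 // => *; rewrite powR_ge0.
  have -> : \sum_(i < m | ~~ Ng i) `|w 0 i| `^ q =
            \sum_(i < m | ~~ Ng i) (w 0 i) `^ q.
    by apply: eq_bigr => i /=; rewrite -leNgt => wi; rewrite ger0_norm.
  have wpos : forall i, ~~ Ng i -> 0 <= w 0 i by move=> i /=; rewrite -leNgt.
  apply: (le_trans (superN q1 wpos)).
  have Hs : \sum_(i < m | ~~ Ng i) w 0 i <= a + \sum_(i < m | Ng i) b i.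
    have := ha; rewrite (bigID Ng) /= => h.
    have h' : \sum_(i < m | Ng i) (- w 0 i) <= \sum_(i < m | Ng i) b i.
      by apply: ler_sum => i _; exact: hb.
    rewrite sumrN in h'.
    rewrite -/a in h; lra.
  have Ys0 : 0 <= \sum_(i < m | ~~ Ng i) w 0 i by apply: sumr_ge0.
  have Ss0 : 0 <= a + \sum_(i < m | Ng i) b i.
    apply: addr_ge0; first exact: normr_ge0.
    by apply: sumr_ge0 => i _; exact: normr_ge0.
  apply: (le_trans (ge0_ler_powR (ltW q0) _ _ Hs)); rewrite ?nnegrE //.
  pose r := a :: [seq b i | i <- enum Ng].
  have E1 : a + \sum_(i < m | Ng i) b i = \sum_(x <- r) x.
    by rewrite big_cons big_map big_enum.
  have E2 : A + \sum_(i < m | Ng i) b i `^ q = \sum_(x <- r) x `^ q.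
    by rewrite big_cons big_map big_enum.
  rewrite E1 E2.
  have r0 : forall x, x \in r -> 0 <= x.
    move=> x; rewrite inE => /orP[/eqP -> | /mapP [i _ ->]]; exact: normr_ge0.
  apply: (le_trans (powmean q1 r0)).
  apply: ler_wpM2r; first by rewrite sumr_ge0 // => *; rewrite powR_ge0.
  apply: ge0_ler_powR; rewrite ?nnegrE ?subr_ge0 ?ler0n //.
  rewrite ler_nat /r /= size_map -cardE.
  have : (0 < #|[predC Ng]|)%N by apply/card_gt0P; exists i0.
  have HC := cardC Ng; rewrite card_ord in HC.
  by move=> H; rewrite -[X in (_ <= X)%N]HC -[X in (X < _)%N]addn0 ltn_add2l.
have h3 : M * (A + \sum_(i < m | Ng i) b i `^ q) <= M * (A + B).
  by apply: ler_wpM2l => //; rewrite lerD2l.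
nra.
Qed.

Lemma core_inf m (w : 'rV[R]_m) (d : 'rV[R]_(m + 1)) :
  (forall i, 0 <= d 0 i) ->
  pnorm +oo%E w <= m%:R * pnorm +oo%E (Qmap w - d).
Proof.
move=> d0; have hb := core_b w d0; have ha := core_a w d0.
rewrite /pnorm eqxx.
set u := Qmap w - d in hb ha *.
set M := \big[Num.max/0]_(j < m + 1) `|u 0 j|.
have uM : forall j, `|u 0 j| <= M by move=> j; exact: le_bigmax.
have M0 : 0 <= M by apply: le_trans (uM (rshift m ord0)).
apply: bigmax_le; first by rewrite mulr_ge0.
move=> i _.
have m1 : 1 <= m%:R :> R by rewrite ler1n (leq_ltn_trans _ (ltn_ord i)).
rewrite ler_norml; apply/andP; split.
  rewrite lerNl; apply: le_trans (hb i) _; apply: le_trans (uM _) _.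
  by rewrite ler_peMl.
have E : w 0 i = \sum_(j < m) w 0 j + \sum_(j < m | j != i) (- w 0 j).
  by rewrite (bigD1 i) //= sumrN addrK.
rewrite E.
have S1 : \sum_(j < m | j != i) (- w 0 j) <= \sum_(j < m | j != i) M.
  by apply: ler_sum => j _; apply: le_trans (hb j) (uM _).
have S2 : \sum_(j < m) M = M + \sum_(j < m | j != i) M by rewrite (bigD1 i).
have S3 : \sum_(j < m) M = m%:R * M by rewrite sumr_const card_ord mulr_natl.
have := le_trans ha (uM _).
lra.
Qed.

Lemma core_finp (q : R) m (w : 'rV[R]_m) (d : 'rV[R]_(m + 1)) : 1 <= q ->
  (forall i, 0 <= d 0 i) ->
  pnorm q%:E w <= (m%:R `^ (q - 1) + 1) `^ q^-1 * pnorm q%:E (Qmap w - d).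
Proof.
move=> q1 d0; have q0 : 0 < q by rewrite (lt_le_trans _ q1).
have h := core_fin w q1 d0.
rewrite /pnorm /=.
rewrite -powRM; last 2 first.
- by rewrite addr_ge0 // powR_ge0.
- by rewrite sumr_ge0 // => *; rewrite powR_ge0.
apply: ge0_ler_powR => //; rewrite ?nnegrE ?invr_ge0.
- exact: ltW.
- by apply: sumr_ge0 => *; rewrite powR_ge0.
- by rewrite mulr_ge0 ?addr_ge0 ?powR_ge0 //; apply: sumr_ge0 => *; rewrite powR_ge0.
Qed.

Lemma coreQ (p : \bar R) m (w : 'rV[R]_m) (d : 'rV[R]_(m + 1)) : (1 <= p)%E ->
  (forall i, 0 <= d 0 i) ->
  pnorm p w <= normQ p m * pnorm p (Qmap w - d).
Proof.
case: p => [q| |] //; last by move=> _ d0; rewrite /normQ eqxx; exact: core_inf.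
rewrite lee_fin => q1 d0; rewrite /normQ /=.
exact: core_finp.
Qed.
End S.

Section T.
Variable R : realType.

Lemma cont_sum (T : topologicalType) (I : Type) (r : seq I) (P : pred I)
  (F : I -> T -> R) : (forall i, continuous (F i)) ->
  continuous (fun t => \sum_(i <- r | P i) F i t).
Proof.
move=> cF; elim: r => [|a r IH].
  under eq_fun do rewrite big_nil; exact: cst_continuous.
under eq_fun do rewrite big_cons.
case: (P a) => // x; exact: (@continuousD _ _ _ (F a) (fun t => \sum_(i <- r | P i) F i t) x (cF a x) (IH x)).
Qed.

Lemma cont_max (T : topologicalType) (I : Type) (r : seq I)
  (F : I -> T -> R) : (forall i, continuous (F i)) ->
  continuous (fun t => \big[Num.max/0]_(i <- r) F i t).
Proof.
move=> cF; elim: r => [|a r IH].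
  under eq_fun do rewrite big_nil; exact: cst_continuous.
under eq_fun do rewrite big_cons.
move=> x; exact: (@continuous_max R T (F a) (fun t => \big[Num.max/0]_(i <- r) F i t) x (cF a x) (IH x)).
Qed.

Lemma cont_powR (T : topologicalType) (g : T -> R) (r : R) : 0 < r ->
  (forall t, 0 <= g t) -> continuous g -> continuous (fun t => g t `^ r).
Proof.
move=> r0 g0 cg x.
have [gx0|] := eqVneq (g x) 0; last first.
  move=> gxn0; have gxp : 0 < g x by rewrite lt0r gxn0 g0.
  have cp : {for g x, continuous (fun a : R => a `^ r)}.
    apply/differentiable_continuous/derivable1_diffP/derivable_powR.
    by rewrite in_itv /= andbT.
  exact: (continuous_comp (cg x) cp).
apply/cvgrPdist_le => e e0.
have e'0 : 0 < e `^ r^-1 by rewrite powR_gt0.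
have H : \forall t \near x, `|g x - g t| < e `^ r^-1.
  by apply: (proj1 (cvgrPdist_lt _ _) (cg x)).
move: H; apply: filterS => t.
rewrite gx0 powR0 ?gt_eqF // !sub0r !normrN (ger0_norm (g0 t)) ger0_norm ?powR_ge0 // => gte.
have -> : e = (e `^ r^-1) `^ r by rewrite -powRrM mulVf ?gt_eqF ?powRr1 ?ltW.
apply: ge0_ler_powR; rewrite ?nnegrE ?powR_ge0 //; [exact: ltW | exact: ltW].
Qed.

Lemma pnorm_cont (p : \bar R) k (T : topologicalType) (G : T -> 'rV[R]_k) :
  (1 <= p)%E -> (forall j, continuous (fun t => G t 0 j)) ->
  continuous (fun t => pnorm p (G t)).
Proof.
move=> p1 cG.
have cA : forall j, continuous (fun t => `|G t 0 j|).
  by move=> j x; apply: (continuous_comp (cG j x)); exact: norm_continuous.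
case: p p1 => [q| |] //; last by move=> _; rewrite /pnorm eqxx; exact: cont_max.
rewrite lee_fin => q1; have q0 : 0 < q by rewrite (lt_le_trans _ q1).
rewrite /pnorm /=.
apply: cont_powR; first by rewrite invr_gt0.
  by move=> t; apply: sumr_ge0 => *; rewrite powR_ge0.
by apply: cont_sum => i; apply: cont_powR.
Qed.

Lemma regroup (V : nmodType) N N' (idx : 'I_N' -> 'I_N) (F : 'I_N' -> 'I_N -> V) :
  \sum_(i < N) \sum_(k < N' | idx k == i) F k i = \sum_(k < N') F k (idx k).
Proof.
under eq_bigr do rewrite big_mkcond.
rewrite exchange_big /=; apply: eq_bigr => k _.
by rewrite -big_mkcond /= (big_pred1 (idx k)) // => i; rewrite /= eq_sym.
Qed.

Definition simplex N := [set l : 'rV[R]_N |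
  (forall i, 0 <= l 0 i <= 1) /\ \sum_(i < N) l 0 i = 1].

Lemma reg m (x0 : 'rV[R]_m) (s' : seq 'rV[R]_m) z :
  Defs.conv [set` (x0 :: s')] z ->
  exists l : 'rV[R]_(size (x0 :: s')), simplex l /\
    z = \sum_(i < size (x0 :: s')) l 0 i *: nth 0 (x0 :: s') i.
Proof.
set s := x0 :: s'.
move=> [N' [w [a [w0 [w1 [aA ->]]]]]].
pose idx k : 'I_(size s').+1 := inord (index (a k) s).
have idxE k : nth 0 s (idx k) = a k.
  by rewrite /idx inordK ?index_mem ?nth_index //; exact: aA.
exists (\row_i \sum_(k < N' | idx k == i) w k).
split; first split.
- move=> i; rewrite mxE; apply/andP; split; first by apply: sumr_ge0.
  rewrite -w1 [X in _ <= X](bigID (fun k => idx k == i)) /= lerDl.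
  by apply: sumr_ge0.
- under eq_bigr do rewrite mxE.
  by rewrite (regroup idx (fun k _ => w k)).
- under [RHS]eq_bigr do rewrite mxE scaler_suml.
  rewrite (regroup idx (fun k i => w k *: nth 0 s i)).
  by apply: eq_bigr => k _; rewrite idxE.
Qed.

Lemma attain (p : \bar R) m (y x0 : 'rV[R]_m) (s' : seq 'rV[R]_m) (r : R) :
  (1 <= p)%E ->
  (forall e, 0 < e -> exists z, Defs.conv [set` (x0 :: s')] z /\ pnorm p (y - z) <= r + e) ->
  exists z, Defs.conv [set` (x0 :: s')] z /\ pnorm p (y - z) <= r.
Proof.
set s := x0 :: s'.
move=> p1 H.
pose Phi (l : 'rV[R]_(size s)) := \sum_(i < size s) l 0 i *: nth 0 s i.
pose f l := pnorm p (y - Phi l).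
have cf : continuous f.
  apply: pnorm_cont => // j.
  have -> : (fun l => (y - Phi l) 0 j) =
            (fun l => y 0 j - \sum_(i < size s) l 0 i * (nth 0 s i) 0 j).
    apply: funext => l; rewrite !mxE summxE; congr (_ - _).
    by apply: eq_bigr => i _; rewrite mxE.
  have cS : continuous (fun l : 'rV[R]_(size s) => \sum_(i < size s) l 0 i * (nth 0 s i) 0 j).
    apply: cont_sum => i t.
    have c1 := @coord_continuous R 1 (size s) 0 i t.
    have := continuousM c1 (@cst_continuous _ _ (nth 0 s i 0 j) t). by [].
  move=> x; exact: (continuousB (@cst_continuous _ _ (y 0 j) x) (cS x)).
have [z0 [cz0 _]] := H 1 ltr01.
have [l0 [Dl0 _]] := reg cz0.
have cbox : compact [set v : 'rV[R]_(size s) | forall i, `[0, 1]%classic (v ord0 i)].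
  by apply: (@rV_compact _ _ (fun=> `[0, 1]%classic : set R)) => _; exact: segment_compact.
have cD : compact (@simplex (size s)).
  have -> : @simplex (size s) = [set v : 'rV[R]_(size s) | forall i, `[0, 1]%classic (v ord0 i)]
     `&` ((fun l : 'rV[R]_(size s) => \sum_(i < size s) l 0 i) @^-1` [set x | x = 1]).
    apply/seteqP; split => l /=.
      by move=> [h1 h2]; split => // i; rewrite in_itv /=; exact: h1.
    by move=> [h1 h2]; split => // i; have := h1 i; rewrite in_itv.
  apply: compact_closedI => //; apply: preimage_closed; last exact: closed_eq.
  move=> x _; apply: cont_sum => i; exact: coord_continuous.
have [ls Dls minf] := EVT_min_rV (ex_intro _ l0 Dl0) cD (continuous_subspaceT cf).
exists (Phi ls); split.
  move: Dls; rewrite inE => -[Dls1 Dls2].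
  exists (size s), (fun i => ls 0 i), (fun i => nth 0 s i); split.
    by move=> i; case/andP: (Dls1 i).
  split => //; split => // i; exact: mem_nth.
apply/ler_addgt0Pr => e e0.
have [z [cz hz]] := H e e0.
have [l [Dl zE]] := reg cz; rewrite zE in hz.
by apply: le_trans (minf l (mem_set Dl)) hz.
Qed.
End T.

Section M.
Variable R : realType.

Lemma QmapD m (u v : 'rV[R]_m) : Qmap (u + v) = Qmap u + Qmap v.
Proof.
rewrite /Qmap add_row_mx; congr row_mx; apply/matrixP => i j; rewrite !mxE.
by rewrite -opprD -big_split /=; congr (- _); apply: eq_bigr => k _; rewrite mxE.
Qed.

Lemma QmapZ m a (u : 'rV[R]_m) : Qmap (a *: u) = a *: Qmap u.
Proof.
rewrite /Qmap scale_row_mx; congr row_mx; apply/matrixP => i j; rewrite !mxE.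
by rewrite mulrN mulr_sumr; congr (- _); apply: eq_bigr => k _; rewrite mxE.
Qed.

Lemma Qmap0 m : Qmap (0 : 'rV[R]_m) = 0.
Proof. by rewrite -(scale0r (0 : 'rV[R]_m)) QmapZ scale0r. Qed.

Lemma QmapB m (u v : 'rV[R]_m) : Qmap (u - v) = Qmap u - Qmap v.
Proof. by rewrite QmapD -scaleN1r QmapZ scaleN1r. Qed.

Lemma Qmap_sum m N (w : 'I_N -> R) (v : 'I_N -> 'rV[R]_m) :
  Qmap (\sum_(k < N) w k *: v k) = \sum_(k < N) w k *: Qmap (v k).
Proof.
rewrite (big_morph (@Qmap R m) (@QmapD m) (@Qmap0 m)).
by apply: eq_bigr => k _; rewrite QmapZ.
Qed.

Lemma normQ_ge0 (p : \bar R) m : (1 <= p)%E -> 0 <= normQ p m.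
Proof. by case: p => [q| |] // _; rewrite /normQ /= ?powR_ge0 ?ler0n. Qed.
End M.

Unset Implicit Arguments.

Theorem mainTheorem17 (R : realType) (n m : nat)
  (S : set ('rV[R]_n * 'rV[R]_m)) (p : \bar R) (Sbar : set ('rV[R]_n * 'rV[R]_m))
  (eps : R) :
  convex_set2 S -> mocp_bounded S -> (1 <= p)%E ->
  hausdorff_finite_sol p S Sbar eps ->
  cp_finite_sol p S Sbar (normQ p m * eps).
Proof.
move=> _ _ p1 [Sne Sfin SsubS Hd]; split => //.
move=> y [[x y'] Sxy <-] /=.
set nq := normQ p m.
have nq0 : 0 <= nq := normQ_ge0 m p1.
set A := Defs.msum (Defs.conv (@Pmap R n m @` Sbar)) (@orthant R (m + 1)).
have Hinf : (ereal_inf [set (pnorm p (Qmap y' - a2))%:E | a2 in A] <= eps%:E)%E.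
  move: Hd; rewrite /hausdorff ge_max => /andP[H1 _].
  apply: le_trans H1; apply: ereal_sup_ubound => /=.
  exists (Qmap y') => //.
  apply: subset_closure.
  exists (Pmap (x, y')); first by exists (x, y').
  by exists 0; [move=> i; rewrite mxE | rewrite addr0].
have stepB : forall e, 0 < e -> exists z, Defs.conv (snd @` Sbar) z /\
    pnorm p (y' - z) <= nq * eps + e.
  move=> e e0.
  set de := e / (nq + 1).
  have de0 : 0 < de by rewrite divr_gt0 // ltr_wpDl.
  have : (ereal_inf [set (pnorm p (Qmap y' - a2))%:E | a2 in A] < (eps + de)%:E)%E.
    by apply: le_lt_trans Hinf _; rewrite lte_fin ltrDl.
  move=> /ereal_inf_lt [_ [a2 Aa2 <-]]; rewrite lte_fin => Ha2.
  case: Aa2 => zc [N [w [a [w0 [w1 [aP zcE]]]]]] [d d0 a2E].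
  have /choice [bk hbk] : forall k, exists b, Sbar b /\ Pmap b = a k.
    by move=> k; have [b Sb <-] := aP k; exists b.
  exists (\sum_(k < N) w k *: (bk k).2); split.
    exists N, w, (fun k => (bk k).2); split => //; split => //; split => // k.
    by exists (bk k) => //; case: (hbk k).
  have zcQ : zc = Qmap (\sum_(k < N) w k *: (bk k).2).
    rewrite zcE Qmap_sum; apply: eq_bigr => k _; by case: (hbk k) => _ <-.
  have := coreQ (y' - \sum_(k < N) w k *: (bk k).2) p1 d0.
  rewrite QmapB -zcQ => H.
  rewrite -a2E opprD addrA in Ha2.
  have ->: e = (nq + 1) * de by rewrite /de mulrC divfK // gt_eqF // ltr_wpDl.
  apply: le_trans H _.
  have : nq * pnorm p (Qmap y' - zc - d) <= nq * (eps + de).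
    by apply: ler_wpM2l => //; exact: ltW.
  have : 0 <= de by exact: ltW.
  move=> h1 h2; rewrite -/nq; nra.
have : finite_set (snd @` Sbar) := finite_image _ Sfin.
move/finite_seqP => [s sE].
case: s sE => [|x0 s'] sE.
  case: Sne => b Sb; have : (snd @` Sbar) b.2 by exists b.
  by rewrite sE.
rewrite sE in stepB.
have [z [cz hz]] := @attain R p m y' x0 s' (nq * eps) p1 stepB.
exists z; first by rewrite sE.
exists (y' - z) => //.
by rewrite addrC subrK.
Qed.
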